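(* There is a constant $C>0$ such that for every integer $n\ge 1$, every graph on $n$ vertices has at most $C\cdot \rho^n\cdot n$ minimal separators, where $\rho = \frac{1+\sqrt{5}}{2}$ is the golden ratio. That is, $\mathrm{sep}(n) = O(\rho^n\cdot n)$.
   Context: All graphs are finite and simple. For a graph $G=(V,E)$ and two vertices $a,b\in V$, a set $S\subseteq V\setminus\{a,b\}$ is an $(a,b)$-separator if $a$ and $b$ lie in different connected components of $G-S$ (the graph obtained by deleting the vertices of $S$). An $(a,b)$-separator is minimal if no proper subset of it is an $(a,b)$-separator. A set $S\subset V$ is a minimal separator of $G$ if it is a minimal $(a,b)$-separator for some pair of distinct vertices $a,b\in V$. $\mathrm{sep}(n)$ denotes the maximum, over all graphs on $n$ vertices, of the number of minimal separators of the graph. *)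

(* Defs.v *)
From mathcomp Require Import all_boot.
From Stdlib Require Import Reals.

Set Implicit Arguments.
Unset Strict Implicit.
Unset Printing Implicit Defensive.

Definition simple_graph (T : finType) (e : rel T) : Prop :=
  symmetric e /\ irreflexive e.

Definition del_rel (T : finType) (e : rel T) (S : {set T}) : rel T :=
  [rel x y | [&& e x y, x \notin S & y \notin S]].

Definition is_sep (T : finType) (e : rel T) (a b : T) (S : {set T}) : bool :=
  [&& a \notin S, b \notin S & ~~ connect (del_rel e S) a b].

Definition is_min_sep (T : finType) (e : rel T) (a b : T) (S : {set T}) : bool :=
  is_sep e a b S && [forall S' : {set T}, (S' \proper S) ==> ~~ is_sep e a b S'].

Definition is_minimal_separator (T : finType) (e : rel T) (S : {set T}) : bool :=
  [exists a : T, exists b : T, (a != b) && is_min_sep e a b S].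

Definition num_min_seps (T : finType) (e : rel T) : nat :=
  #|[set S : {set T} | is_minimal_separator e S]|.

Definition golden_ratio : R := ((1 + sqrt 5) / 2)%R.

(* Main.v *)
Require Import Defs.
From mathcomp Require Import all_boot.
From mathcomp Require Import zify.
From Stdlib Require Import Reals Lra Lia Psatz.

Section Sep.
Variable T : finType.
Variable e : rel T.
Local Open Scope nat_scope.
Implicit Types (X Y C Z S : {set T}) (u v w : T).

Definition Nb (C : {set T}) : {set T} :=
  [set w | (w \notin C) && [exists x in C, e x w]].

Definition connb (v : T) (C : {set T}) : bool :=
  [forall Z : {set T}, ((v \in Z) && (Z \proper C)) ==>
     [exists x in Z, exists y in C :\: Z, e x y]].

Definition Fam (v : T) (X Y : {set T}) : {set {set T}} :=
  [set C : {set T} | [&& X \subset C, [disjoint C & Y], connb v C &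
     (2 * #|C| + #|Nb C :|: Y| <= #|T|)]].

Lemma fam_empty v X Y : #|T| < 2 * #|X| + #|Y| -> Fam v X Y = set0.
Proof.
move=> H; apply/setP=> C; rewrite !inE.
apply/negP=> /and4P [XC _ _ Hc].
have h1 := subset_leq_card XC.
have h2 : #|Y| <= #|Nb C :|: Y| by apply: subset_leq_card; apply: subsetUr.
lia.
Qed.

Lemma fam_base v X Y : v \in X -> Nb X \subset Y -> Fam v X Y \subset [set X].
Proof.
move=> vX NY; apply/subsetP=> C; rewrite !inE => /and4P [XC dCY cC _].
apply/eqP/esym/eqP; apply/negPn/negP=> neq.
have pr : X \proper C by rewrite properEneq neq XC.
move/forallP: cC => /(_ X); rewrite vX pr /= => /existsP [x /andP [xX /existsP [y /andP [yCX exy]]]].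
move: yCX; rewrite inE => /andP [yX yC].
have yN : y \in Nb X by rewrite inE yX /=; apply/existsP; exists x; rewrite xX.
have yY := subsetP NY _ yN.
by move: dCY; rewrite disjoint_subset => /subsetP /(_ _ yC); rewrite inE yY.
Qed.

Lemma fam_step v X Y u : u \in Nb X -> u \notin Y ->
  Fam v X Y \subset Fam v (u |: X) Y :|: Fam v X (u |: Y).
Proof.
move=> uN uY; apply/subsetP=> C; rewrite !inE => /and4P [XC dCY cC Hc].
case uC: (u \in C).
  by rewrite subUset sub1set uC XC dCY cC Hc.
apply/orP; right.
have uNC : u \in Nb C.
  move: uN; rewrite !inE uC /= => /andP [_ /existsP [x /andP [xX exu]]].
  by apply/existsP; exists x; rewrite (subsetP XC _ xX).
have -> : Nb C :|: (u |: Y) = Nb C :|: Y.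
  by rewrite setUCA (setUidPr _) // sub1set inE uNC.
rewrite XC cC Hc !andbT /=.
apply/pred0P=> w /=; rewrite !inE; apply/negP=> /andP [wC /orP [/eqP wu | wY]].
  by subst w; rewrite uC in wC.
by move/pred0P: dCY => /(_ w); rewrite /= wC wY.
Qed.

Fixpoint fibb (s : nat) : nat :=
  match s with
  | 0 => 1
  | 1 => 1
  | S ((S k) as k') => Nat.add (fibb k') (fibb k)
  end.

Lemma fibbSS s : fibb s.+2 = fibb s.+1 + fibb s.
Proof. by []. Qed.

Lemma fibb_gt0 s : 0 < fibb s.
Proof.
elim: s {-2}s (leqnn s) => [|m IH] s hs.
  by move: hs; rewrite leqn0 => /eqP ->.
case: s hs => [|[|s]] hs //.
rewrite fibbSS; have := IH s.+1 hs; lia.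
Qed.

Lemma fibb_S s : fibb s <= fibb s.+1.
Proof.
case: s => [|s] //; rewrite fibbSS; lia.
Qed.

Lemma fibb_mono m n : m <= n -> fibb m <= fibb n.
Proof.
move=> /subnK <-; elim: (n - m) => [|k IH] //.
by rewrite addSn; apply: leq_trans IH (fibb_S _).
Qed.

Lemma fam_le s : forall v X Y, v \in X -> 2 * #|X| + #|Y| + s = #|T| ->
  #|Fam v X Y| <= fibb s.
Proof.
elim: s {-2}s (leqnn s) => [|m IH] s hs.
  move: hs; rewrite leqn0 => /eqP -> v X Y vX Hs.
  case: (pickP [pred u | u \in Nb X :\: Y]) => [u /= | none].
    rewrite inE => /andP [uY uN].
    have uX : u \notin X by move: uN; rewrite inE => /andP [].
    apply: leq_trans (subset_leq_card (@fam_step v X Y u uN uY)) _.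
    rewrite (@fam_empty v (u |: X) (Y)); last by rewrite cardsU1 uX; lia.
    rewrite (@fam_empty v (X) (u |: Y)); last by rewrite cardsU1 uY; lia.
    by rewrite setU0 cards0.
  have NY : Nb X \subset Y.
    apply/subsetP=> u uN; apply/negPn/negP=> uY.
    by have := none u; rewrite /= inE uY uN.
  by apply: leq_trans (subset_leq_card (@fam_base v X Y vX NY)) _; rewrite cards1.
move=> v X Y vX Hs.
case: (pickP [pred u | u \in Nb X :\: Y]) => [u /= | none]; last first.
  have NY : Nb X \subset Y.
    apply/subsetP=> u uN; apply/negPn/negP=> uY.
    by have := none u; rewrite /= inE uY uN.
  apply: leq_trans (subset_leq_card (@fam_base v X Y vX NY)) _; rewrite cards1.
  exact: fibb_gt0.
rewrite inE => /andP [uY uN].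
have uX : u \notin X by move: uN; rewrite inE => /andP [].
apply: leq_trans (subset_leq_card (@fam_step v X Y u uN uY)) _.
apply: leq_trans (leq_card_setU _ _) _.
have vX' : v \in u |: X by rewrite inE vX orbT.
have cX : #|u |: X| = #|X|.+1 by rewrite cardsU1 uX.
have cY : #|u |: Y| = #|Y|.+1 by rewrite cardsU1 uY.
case: s hs Hs => [|[|s]] hs Hs.
- rewrite (@fam_empty v (u |: X) (Y)); last by lia.
  rewrite (@fam_empty v (X) (u |: Y)); last by lia.
  by rewrite !cards0.
- rewrite (@fam_empty v (u |: X) (Y)); last by lia.
  rewrite cards0 add0n.
  have := IH 0 (leq0n _) v X (u |: Y) vX ltac:(lia). by [].
- have h1 := IH s ltac:(lia) v (u |: X) Y vX' ltac:(lia).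
  have h2 := IH s.+1 ltac:(lia) v X (u |: Y) vX ltac:(lia).
  rewrite fibbSS; lia.
Qed.

Lemma fam_le' v : #|Fam v [set v] set0| <= fibb #|T|.
Proof.
case: (leqP 2 #|T|) => h.
  have H := @fam_le (#|T| - 2) v [set v] set0 (set11 v).
  rewrite cards1 cards0 in H.
  have H2 : 2 * 1 + 0 + (#|T| - 2) = #|T| by lia.
  apply: leq_trans (H H2) _; apply: fibb_mono; lia.
by rewrite fam_empty ?cards0 ?cards1.
Qed.

Lemma connect_in (r : rel T) (A : {set T}) a w : a \in A ->
  (forall x y, x \in A -> r x y -> y \in A) -> connect r a w -> w \in A.
Proof.
move=> aA cl /connectP [p pth ->].
elim: p a aA pth => [|y p IH] x xA //= /andP [rxy pth].
exact: IH (cl _ _ xA rxy) pth.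
Qed.

Section Comp.
Variables (S : {set T}) (a b : T).
Hypotheses (aS : a \notin S) (bS : b \notin S)
  (nab : ~~ connect (del_rel e S) a b)
  (mins : forall s, s \in S -> connect (del_rel e (S :\ s)) a b).

Definition Ca := [set w | connect (del_rel e S) a w].

Lemma Ca_notS {w} : w \in Ca -> w \notin S.
Proof.
rewrite inE => H.
have : w \in ~: S.
  apply: (@connect_in _ (~: S) a w _ _ H); first by rewrite inE.
  by move=> x y _; rewrite /del_rel /= inE => /and3P [].
by rewrite inE.
Qed.

Lemma Nb_Ca : Nb Ca = S.
Proof.
apply/setP=> w; apply/idP/idP.
  rewrite inE => /andP [wC /existsP [x /andP [xC exw]]].
  apply/negPn/negP=> wS; move: wC; rewrite inE => /negP; apply.
  apply: connect_trans (_ : connect _ a x) _; first by move: xC; rewrite inE.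
  by apply: connect1; rewrite /del_rel /= exw wS (Ca_notS xC).
move=> wS; rewrite inE.
have wC : w \notin Ca by apply/negP=> /Ca_notS; rewrite wS.
rewrite wC /=; case: (boolP [exists x in Ca, e x w]) => // H.
have : b \in Ca.
  apply: (@connect_in (del_rel e (S :\ w)) Ca a b _ _ (mins w wS)).
    by rewrite inE connect0.
  move=> x y xC; rewrite /del_rel /= !inE => /and3P [exy _ yS].
  case yS': (y \in S).
    move: yS; rewrite yS' andbT => /negPn /eqP yw; subst y.
    by move/negP: H; case; apply/existsP; exists x; rewrite xC.
  apply: connect_trans (_ : connect _ a x) _; first by move: xC; rewrite inE.
  by apply: connect1; rewrite /del_rel /= exy yS' (Ca_notS xC).
by rewrite inE (negbTE nab).
Qed.

Lemma conn_Ca : connb a Ca.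
Proof.
apply/forallP=> Z; apply/implyP=> /andP [aZ pr].
case: (boolP [exists x in Z, exists y in Ca :\: Z, e x y]) => // H.
have sub : Ca \subset Z.
  apply/subsetP=> w; rewrite inE => /connect_in; apply=> // x y xZ rxy.
  have xC : x \in Ca := subsetP (proper_sub pr) _ xZ.
  have yC : y \in Ca.
    rewrite inE; apply: connect_trans (_ : connect _ a x) _;
      first by move: xC; rewrite inE.
    exact: connect1.
  apply/negPn/negP=> yZ; move/negP: H; apply; apply/existsP; exists x; rewrite xZ /=.
  apply/existsP; exists y; rewrite !inE yZ /=.
  move: yC; rewrite inE => ->; by move: rxy; rewrite /del_rel /= => /and3P [].
by move: pr; rewrite properE sub andbF.
Qed.

End Comp.

Lemma del_sym S : symmetric e -> symmetric (del_rel e S).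
Proof. by move=> se x y; rewrite /del_rel /= se [(x \notin S) && _]andbC. Qed.

Lemma minsep_fam S : simple_graph e -> is_minimal_separator e S ->
  exists v, exists2 C, C \in Fam v [set v] set0 & S = Nb C.
Proof.
move=> [se _] /existsP [a /existsP [b /andP [_ /andP [sep /forallP mins]]]].
move: sep => /and3P [aS bS nab].
have mins' s : s \in S -> connect (del_rel e (S :\ s)) a b.
  move=> sS; have := mins (S :\ s); rewrite properD1 //= /is_sep.
  have aS' : a \notin S :\ s by rewrite !inE (negbTE aS) andbF.
  have bS' : b \notin S :\ s by rewrite !inE (negbTE bS) andbF.
  by rewrite aS' bS' /= => /negbNE.
have csym := sym_connect_sym (del_sym S se).
have nba : ~~ connect (del_rel e S) b a by rewrite csym.
have minsb s : s \in S -> connect (del_rel e (S :\ s)) b a.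
  by move=> sS; rewrite (sym_connect_sym (del_sym _ se)); apply: mins'.
have NA := @Nb_Ca S a b aS nab mins'.
have NB := @Nb_Ca S b a bS nba minsb.
have dis : [disjoint Ca S a & Ca S b].
  apply/pred0P=> w /=; apply/negP=> /andP [].
  rewrite !inE => h1 h2; move: nab; rewrite (connect_trans h1) //.
  by rewrite csym.
have dA : [disjoint Ca S a & S].
  by apply/pred0P=> w /=; apply/negP=> /andP [/(@Ca_notS S a aS) /negP].
have dB : [disjoint Ca S b & S].
  by apply/pred0P=> w /=; apply/negP=> /andP [/(@Ca_notS S b bS) /negP].
have tot : #|Ca S a| + #|Ca S b| + #|S| <= #|T|.
  have e1 : #|Ca S a :|: Ca S b| = #|Ca S a| + #|Ca S b|.
    by rewrite cardsU (disjoint_setI0 dis) cards0 subn0.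
  have e2 : #|(Ca S a :|: Ca S b) :|: S| = #|Ca S a :|: Ca S b| + #|S|.
    rewrite cardsU setIUl (disjoint_setI0 dA) (disjoint_setI0 dB) setU0 cards0.
    by rewrite subn0.
  by rewrite -e1 -e2 max_card.
have inF v C : v \in C -> connb v C -> Nb C = S -> 2 * #|C| + #|S| <= #|T| ->
   C \in Fam v [set v] set0.
  move=> vC cC NC H; rewrite inE sub1set vC cC setU0 NC H /= andbT.
  by apply/pred0P=> x /=; rewrite inE andbF.
case: (leqP #|Ca S a| #|Ca S b|) => h.
  exists a; exists (Ca S a); last by rewrite NA.
  apply: inF; [by rewrite inE connect0 | exact: conn_Ca | exact: NA | lia].
exists b; exists (Ca S b); last by rewrite NB.
  apply: inF; [by rewrite inE connect0 | exact: conn_Ca | exact: NB | lia].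
Qed.

Lemma num_le : simple_graph e -> num_min_seps e <= #|T| * fibb #|T|.
Proof.
move=> sg.
have sub : [set S | is_minimal_separator e S] \subset
           \bigcup_(v : T) (Nb @: Fam v [set v] set0).
  apply/subsetP=> S; rewrite inE => /(@minsep_fam S sg) [v [C CF ->]].
  by apply/bigcupP; exists v => //; apply: imset_f.
rewrite /num_min_seps; apply: leq_trans (subset_leq_card sub) _.
rewrite -sum_nat_const.
apply: (big_ind2 (fun (X : {set {set T}}) n => #|X| <= n)).
- by rewrite cards0.
- move=> X1 n1 X2 n2 h1 h2; apply: leq_trans (leq_card_setU _ _) _; lia.
- move=> v _; apply: leq_trans (leq_imset_card _ _) (fam_le' v).
Qed.

End Sep.

Lemma gr2 : (golden_ratio ^ 2 = golden_ratio + 1)%R.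
Proof.
unfold golden_ratio. have h := sqrt_sqrt 5 ltac:(lra). nra.
Qed.

Lemma gr_pos : (0 < golden_ratio)%R.
Proof. unfold golden_ratio. have h := sqrt_pos 5. lra. Qed.

Lemma fibb_R s : (INR (fibb s) <= golden_ratio ^ s)%R.
Proof.
have g2 := gr2; have gp := gr_pos.
have g1 : (1 <= golden_ratio)%R by nra.
suff : (INR (fibb s) <= golden_ratio ^ s /\ INR (fibb s.+1) <= golden_ratio ^ s.+1)%R
  by case.
elim: s => [|s [IH1 IH2]]; first by simpl; lra.
split=> //.
rewrite fibbSS plus_INR.
have -> : (golden_ratio ^ s.+2 = golden_ratio ^ s.+1 + golden_ratio ^ s)%R.
  have g2' : (golden_ratio * golden_ratio = golden_ratio + 1)%R.
    by rewrite -g2 /=; ring.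
  change (golden_ratio ^ s.+2)%R with (golden_ratio * (golden_ratio * golden_ratio ^ s))%R.
  change (golden_ratio ^ s.+1)%R with (golden_ratio * golden_ratio ^ s)%R.
  rewrite -Rmult_assoc g2'; ring.
lra.
Qed.

Theorem theorem1 :
  exists C : R, (0 < C)%R /\
    forall (n : nat) (e : rel 'I_n), (1 <= n)%N -> simple_graph e ->
      (INR (num_min_seps e) <= C * golden_ratio ^ n * INR n)%R.
Proof.
exists 1%R; split; first lra.
move=> n e _ sg.
have h := @num_le _ e sg; rewrite card_ord in h.
have h2 := le_INR _ _ (elimT leP h).
have e2 : INR (n * fibb n) = (INR n * INR (fibb n))%R by rewrite -mult_INR.
rewrite e2 in h2.
apply: Rle_trans h2 _.
rewrite (Rmult_comm (INR n)) Rmult_1_l.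
apply: Rmult_le_compat_r; first exact: pos_INR.
exact: fibb_R.
Qed.
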